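(* Let $k\ge4$ be even and let $G$ be a $k$-uniform hypergraph. Then the number of minimal canonical H-eigenvectors of the Laplacian tensor $\mathcal D-\mathcal A$ corresponding to the eigenvalue $0$, counted with $\mathbf x$ and $-\mathbf x$ identified, equals (number of even-bipartite connected components of $G$) $+$ (number of connected components of $G$) $-$ (number of singletons of $G$).
   Context: A $k$-uniform hypergraph $G=(V,E)$ has vertex set $V=[n]$ ($n\ge k$) and nonempty edge set $E$ of $k$-element subsets; $E_i=\{e\in E:i\in e\}$, $d_i=|E_i|$. A singleton is a vertex of degree $0$. Connected components are maximal sets of vertices pairwise joined by chains of edges with consecutive edges intersecting; each singleton is also a connected component. $\mathcal A$: $a_{i_1\dots i_k}=\frac1{(k-1)!}$ if $\{i_1,\dots,i_k\}\in E$, else $0$; $\mathcal D$ diagonal with $d_{i\dots i}=d_i$; so $((\mathcal D-\mathcal A)\mathbf x^{k-1})_i=d_ix_i^{k-1}-\sum_{e\in E_i}\prod_{j\in e\setminus\{i\}}x_j$. A nonzero $\mathbf x\in\mathbb C^n$ is an eigenvector of $\mathcal T$ for $\lambda$ if $(\mathcal T\mathbf x^{k-1})_i=\lambda x_i^{k-1}$ for all $i$; an H-eigenvector is a real eigenvector; it is canonical if $\max_i|x_i|=1$; an eigenvector of eigenvalue $0$ is minimal if no eigenvector of eigenvalue $0$ has support strictly contained in its support. Counting of even-bipartite connected components: each singleton component contributes $1$; each connected component $C$ with $|C|\ge2$ contributes the number of unordered partitions $\{S,T\}$ of $C$ with $S,T\ne\emptyset$ such that $|e\cap S|$ is even for every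 edge $e\subseteq C$. The number of even-bipartite connected components is the sum of these contributions. *)

(* Defs.v *)
From HB Require Import structures.
From mathcomp Require Import all_boot all_order all_algebra.
Set Implicit Arguments. Unset Strict Implicit. Unset Printing Implicit Defensive.
Import Order.TTheory GRing.Theory Num.Theory.
Local Open Scope ring_scope.

(* A hypergraph on vertex set 'I_n is given by its edge set E : {set {set 'I_n}}.
   Vectors x in C^n are row vectors 'rV[C]_n, with entries x ord0 i. *)

Section Hyper.
Variable n : nat.
Implicit Types (E : {set {set 'I_n}}).

Definition is_uniform_hypergraph (k : nat) E : Prop :=
  (k <= n)%N /\ E != set0 /\ (forall e, e \in E -> #|e| = k).

Definition edges_at E (i : 'I_n) : {set {set 'I_n}} := [set e in E | i \in e].
Definition deg E (i : 'I_n) : nat := #|edges_at E i|.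

(* ((D - A) x^{k-1})_i = d_i x_i^{k-1} - sum_{e in E_i} prod_{j in e \ {i}} x_j *)
Definition lap_apply {C : numClosedFieldType} (k : nat) E (x : 'rV[C]_n) (i : 'I_n) : C :=
  (deg E i)%:R * x ord0 i ^+ k.-1
  - \sum_(e in edges_at E i) \prod_(j in e :\ i) x ord0 j.

Definition lap_eigvec {C : numClosedFieldType} (k : nat) E (lambda : C) (x : 'rV[C]_n) : Prop :=
  x != 0 /\ forall i, lap_apply k E x i = lambda * x ord0 i ^+ k.-1.

Definition lap_H_eigvec {C : numClosedFieldType} (k : nat) E (lambda : C) (x : 'rV[C]_n) : Prop :=
  lap_eigvec k E lambda x /\ forall i, x ord0 i \is Num.real.

Definition canonical {C : numClosedFieldType} (x : 'rV[C]_n) : Prop :=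
  (forall i, `|x ord0 i| <= 1) /\ exists i, `|x ord0 i| = 1.

Definition supp {C : numClosedFieldType} (x : 'rV[C]_n) : {set 'I_n} :=
  [set i | x ord0 i != 0].

Definition minimal0 {C : numClosedFieldType} (k : nat) E (x : 'rV[C]_n) : Prop :=
  lap_eigvec k E 0 x /\
  forall y : 'rV[C]_n, lap_eigvec k E 0 y -> ~ (supp y \proper supp x).

Definition minimal_canonical_H0 {C : numClosedFieldType} (k : nat) E (x : 'rV[C]_n) : Prop :=
  lap_H_eigvec k E 0 x /\ canonical x /\ minimal0 k E x.

Definition adj E : rel 'I_n := fun i j => [exists e in E, (i \in e) && (j \in e)].

Definition components E : {set {set 'I_n}} :=
  [set [set j | connect (adj E) i j] | i : 'I_n].

Definition num_components E : nat := #|components E|.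

Definition num_singletons E : nat := #|[set i : 'I_n | deg E i == 0%N]|.

Definition even_bip_partitions E (Cc : {set 'I_n}) : {set {set {set 'I_n}}} :=
  [set P : {set {set 'I_n}} | [exists S : {set 'I_n}, exists T : {set 'I_n},
     [&& P == [set S; T], S != set0, T != set0, [disjoint S & T], S :|: T == Cc
       & [forall e in E, (e \subset Cc) ==> ~~ odd #|e :&: S|]]]].

Definition even_bip_contrib E (Cc : {set 'I_n}) : nat :=
  if #|Cc| == 1%N then 1%N else #|even_bip_partitions E Cc|.

Definition num_even_bip_components E : nat :=
  (\sum_(Cc in components E) even_bip_contrib E Cc)%N.

End Hyper.

(* Main.v *)
Require Import Defs.
From HB Require Import structures.
From mathcomp Require Import all_boot all_order all_algebra.
From mathcomp Require Import zify.
Import Order.TTheory GRing.Theory Num.Theory.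
Set Implicit Arguments. Unset Strict Implicit. Unset Printing Implicit Defensive.
Local Open Scope ring_scope.

Section Proof5.
Variable C : numClosedFieldType.
Variables n k : nat.
Variable E : {set {set 'I_n}}.
Hypothesis hkeven : ~~ odd k.
Hypothesis hk2 : (2 <= k)%N.
Hypothesis hEk : forall e, e \in E -> #|e| = k.

Definition compo (i : 'I_n) : {set 'I_n} := [set j | connect (adj E) i j].

Lemma adj_sym : symmetric (adj E).
Proof.
move=> i j; apply/existsP/existsP => [] [e He]; exists e;
  by rewrite andbCA andbC andbA in He *; move: He; rewrite -andbA andbCA andbA.
Qed.

Lemma connect_symE i j : connect (adj E) i j = connect (adj E) j i.
Proof. exact: (sym_connect_sym adj_sym). Qed.

Lemma compo_edge i j e : j \in compo i -> e \in E -> j \in e -> e \subset compo i.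
Proof.
rewrite inE => hij he hje; apply/subsetP => l hl; rewrite inE.
apply: connect_trans hij (connect1 _); apply/existsP; exists e; by rewrite he hje hl.
Qed.

Lemma compo_self i : i \in compo i.
Proof. by rewrite inE connect0. Qed.

Lemma edge_out i e j : i \notin compo j -> e \in E -> i \in e -> forall m, m \in e -> m \notin compo j.
Proof.
move=> hi he hie m hm; apply/negP => hmc.
by move/subsetP: (compo_edge hmc he hm) => /(_ i hie); apply/negP.
Qed.

Lemma card_edge_minus i e : e \in E -> i \in e -> #|e :\ i| = k.-1.
Proof. move=> he hie; by rewrite -(hEk he) [in RHS](cardsD1 i e) hie. Qed.

Lemma edge_other i e : e \in E -> i \in e -> exists m, m \in e :\ i.
Proof.
move=> he hie; apply/set0Pn; rewrite -card_gt0 (card_edge_minus he hie).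
by case: k hk2 => [|[|kk]].
Qed.


Lemma prod_le (A : {set 'I_n}) (f : 'I_n -> C) r :
  (forall m, m \in A -> 0 <= f m <= r) -> \prod_(m in A) f m <= r ^+ #|A|.
Proof. by move=> h; rewrite -prodr_const; apply: ler_prod. Qed.

Lemma prod_lt (A : {set 'I_n}) (f : 'I_n -> C) r l :
  (forall m, m \in A -> 0 <= f m <= r) -> l \in A -> f l < r ->
  \prod_(m in A) f m < r ^+ #|A|.
Proof.
move=> h lA hl.
have r0 : 0 < r by apply: le_lt_trans hl; case/andP: (h l lA).
rewrite (bigD1 l) //= (cardsD1 l A) lA add1n exprS.
rewrite (eq_bigl (fun m => m \in A :\ l)); last by move=> m; rewrite !inE andbC.
have hp : \prod_(m in A :\ l) f m <= r ^+ #|A :\ l|.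
  apply: prod_le => m; rewrite !inE => /andP [_ mA]; exact: h.
have hp0 : 0 <= \prod_(m in A :\ l) f m.
  by apply: prodr_ge0 => m; rewrite !inE => /andP [_ mA]; case/andP: (h m mA).
apply: (le_lt_trans (y := f l * r ^+ #|A :\ l|)).
  by apply: ler_wpM2l => //; case/andP: (h l lA).
by rewrite ltr_pM2r // exprn_gt0.
Qed.

Lemma lap0E (y : 'rV[C]_n) i : lap_apply k E y i = 0 ->
  (deg E i)%:R * y ord0 i ^+ k.-1 = \sum_(e in edges_at E i) \prod_(j in e :\ i) y ord0 j.
Proof. by move/eqP; rewrite /lap_apply subr_eq0 => /eqP. Qed.

Lemma maxmod (y : 'rV[C]_n) r : (forall i, lap_apply k E y i = 0) ->
  (forall i, `|y ord0 i| <= r) ->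
  forall j l, `|y ord0 j| = r -> adj E j l -> `|y ord0 l| = r.
Proof.
move=> hy hr j l hj /existsP [e /andP [he /andP [hje hle]]].
move: (hr l); rewrite le_eqVlt => /orP [/eqP //| hlt]; exfalso.
case: (eqVneq l j) => [ejl|hlj]; first by move: hlt; rewrite ejl hj ltxx.
have r0 : 0 < r by apply: le_lt_trans hlt.
have hle1 : forall e', e' \in edges_at E j ->
    \prod_(m in e' :\ j) `|y ord0 m| <= r ^+ k.-1.
  move=> e'; rewrite inE => /andP [he' hje'].
  rewrite -(card_edge_minus he' hje'); apply: prod_le => m _.
  by rewrite normr_ge0 hr.
have hlt1 : \prod_(m in e :\ j) `|y ord0 m| < r ^+ k.-1.
  rewrite -(card_edge_minus he hje); apply: prod_lt (hlt) => [m _|].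
    by rewrite normr_ge0 hr.
  by rewrite !inE hlj hle.
have heE : e \in edges_at E j by rewrite inE he hje.
have hsum : \sum_(e' in edges_at E j) \prod_(m in e' :\ j) `|y ord0 m| <
            \sum_(e' in edges_at E j) r ^+ k.-1.
  rewrite [X in X < _](bigD1 e) //= [X in _ < X](bigD1 e) //=.
  apply: ltr_leD => //; apply: ler_sum => e' /andP [h1 _]; exact: hle1.
have := congr1 (fun z => `|z|) (lap0E (hy j)).
rewrite /= normrM normr_nat normrX hj => heq.
move: hsum; rewrite sumr_const -mulr_natl heq => hsum.
suff h : `|\sum_(e in edges_at E j) \prod_(j0 in e :\ j) y ord0 j0| <=
    \sum_(e' in edges_at E j) \prod_(m in e' :\ j) `|y ord0 m|.
  by have := lt_le_trans hsum h; rewrite ltxx.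
apply: le_trans (ler_norm_sum _ _ _) _.
by apply: ler_sum => e' _; rewrite normr_prod lexx.
Qed.

Lemma conn_max (y : 'rV[C]_n) r : (forall i, lap_apply k E y i = 0) ->
  (forall i, `|y ord0 i| <= r) ->
  forall i j, `|y ord0 i| = r -> connect (adj E) i j -> `|y ord0 j| = r.
Proof.
move=> hy hr i j hi /connectP [p hp ->] {j}.
elim: p i hi hp => [|a p IH] i hi //= /andP [hia hp].
exact: IH (maxmod hy hr hi hia) hp.
Qed.


Definition vec (P N : {set 'I_n}) : 'rV[C]_n :=
  \row_j (if j \in P then 1 else if j \in N then -1 else 0).
Definition restr (A : {set 'I_n}) (y : 'rV[C]_n) : 'rV[C]_n :=
  \row_j (if j \in A then y ord0 j else 0).

Lemma km1 : k.-1 = k.-2.+1.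
Proof. by case: k hk2 => [|[|kk]]. Qed.

Lemma zero_out (y : 'rV[C]_n) c i : (forall j, j \notin compo c -> y ord0 j = 0) ->
  i \notin compo c -> lap_apply k E y i = 0.
Proof.
move=> hy0 hi; rewrite /lap_apply hy0 // km1 exprS mul0r mulr0 sub0r big1 ?oppr0 //.
move=> e; rewrite inE => /andP [he hie].
have [m hm] := edge_other he hie.
rewrite (bigD1 m) //= hy0 ?mul0r //.
by apply: (edge_out hi he hie); move: hm; rewrite !inE => /andP [].
Qed.

Lemma restr_lap (y : 'rV[C]_n) c : (forall i, lap_apply k E y i = 0) ->
  forall i, lap_apply k E (restr (compo c) y) i = 0.
Proof.
move=> hy i; case: (boolP (i \in compo c)) => hi; last first.
  by apply: zero_out hi => j hj; rewrite mxE (negbTE hj).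
rewrite -(hy i) /lap_apply mxE hi; congr (_ - _).
apply: eq_bigr => e; rewrite inE => /andP [he hie].
apply: eq_bigr => m; rewrite !inE => /andP [_ hm].
by rewrite mxE (subsetP (compo_edge hi he hie) m hm).
Qed.

Lemma prod_vec (P N e : {set 'I_n}) : [disjoint P & N] -> e \subset P :|: N ->
  \prod_(m in e) vec P N ord0 m = (-1) ^+ #|e :&: N|.
Proof.
move=> hd he.
rewrite (eq_bigr (fun m => if m \in N then -1 else 1)); last first.
  move=> m hm; rewrite mxE; case: ifP => hmP; first by rewrite (disjointFr hd hmP).
  have := subsetP he m hm; rewrite inE hmP /= => ->; done.
rewrite -big_mkcondr -prodr_const; apply: eq_bigl => m; by rewrite inE.
Qed.

Lemma pow_sign (x : C) : x * x = 1 -> x ^+ k.-1 = x.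
Proof.
move=> hx.
have hk : x ^+ k = 1.
  rewrite -(odd_double_half k) (negbTE hkeven) add0n -muln2 mulnC exprM expr2 hx.
  exact: expr1n.
have k0 : (0 < k)%N by case: k hk2.
by rewrite -[LHS]mulr1 -hx mulrA -exprSr prednK // hk mul1r.
Qed.

Lemma vec_sq (P N : {set 'I_n}) m : [disjoint P & N] -> m \in P :|: N ->
  vec P N ord0 m * vec P N ord0 m = 1.
Proof.
move=> hd; rewrite mxE inE; case: ifP => [_ _|_ /= ->]; first by rewrite mulr1.
by rewrite mulrNN mulr1.
Qed.

Lemma vec_out (P N : {set 'I_n}) m : m \notin P :|: N -> vec P N ord0 m = 0.
Proof. by rewrite mxE inE negb_or => /andP [/negbTE -> /negbTE ->]. Qed.

Lemma vec_eigen (P N : {set 'I_n}) c : [disjoint P & N] -> P :|: N = compo c ->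
  (forall e, e \in E -> e \subset compo c -> ~~ odd #|e :&: N|) ->
  forall i, lap_apply k E (vec P N) i = 0.
Proof.
move=> hd hU hev i; case: (boolP (i \in compo c)) => hi; last first.
  by apply: zero_out hi => j hj; rewrite vec_out // hU.
have hiU : i \in P :|: N by rewrite hU.
have hs := vec_sq hd hiU.
rewrite /lap_apply pow_sign //.
rewrite (eq_bigr (fun _ => vec P N ord0 i)); last first.
  move=> e; rewrite inE => /andP [he hie].
  have hsub := compo_edge hi he hie.
  have hsubU : e \subset P :|: N by rewrite hU.
  have := prod_vec hd hsubU.
  rewrite -signr_odd (negbTE (hev e he hsub)) expr0 (bigD1 i) //=.
  rewrite (eq_bigl (fun m => m \in e :\ i)); last by move=> m; rewrite !inE andbC.
  move=> h; by rewrite -[LHS]mul1r -{1}hs -mulrA h mulr1.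
by rewrite sumr_const mulr_natl subrr.
Qed.


Definition good (p : {set 'I_n} * {set 'I_n}) : bool :=
  [&& [disjoint p.1 & p.2], (p.1 :|: p.2) \in components E &
      [forall e in E, (e \subset p.1 :|: p.2) ==> ~~ odd #|e :&: p.2|]].

Lemma comp_compo Cc : Cc \in components E -> exists c, Cc = compo c.
Proof. by case/imsetP => c _ ->; exists c. Qed.

Lemma compo_comp c : compo c \in components E.
Proof. by apply/imsetP; exists c. Qed.

Lemma exists_max (f : 'I_n -> C) (i0 : 'I_n) : (forall i, f i \is Num.real) ->
  exists i, forall j, f j <= f i.
Proof.
move=> hreal.
suff [i hi] : exists i, forall j, j \in enum 'I_n -> f j <= f i.
  by exists i => j; apply: hi; rewrite mem_enum.
elim: (enum 'I_n) => [|a s [i hi]]; first by exists i0.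
case/orP: (real_leVge (hreal a) (hreal i)) => h.
  by exists i => j; rewrite inE => /orP [/eqP -> //|]; apply: hi.
exists a => j; rewrite inE => /orP [/eqP -> //|/hi hj]; exact: le_trans hj h.
Qed.

Lemma supp_vec (P N : {set 'I_n}) : [disjoint P & N] -> supp (vec P N) = P :|: N.
Proof.
move=> hd; apply/setP => m; rewrite !inE mxE.
case: ifP => _; first by rewrite oner_eq0.
by case: ifP => _; rewrite ?oppr_eq0 ?oner_eq0 ?eqxx.
Qed.

Lemma nz_exists (y : 'rV[C]_n) : y != 0 -> exists j, y ord0 j != 0.
Proof.
move=> hy; apply/existsP; apply: contraR hy => /existsPn h.
by apply/eqP/rowP => j; rewrite !mxE; move: (h j); rewrite negbK => /eqP.
Qed.

Lemma vec_good P N : good (P, N) -> minimal_canonical_H0 k E (vec P N).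
Proof.
case/and3P => /= hd hc /forall_inP hev.
have [c hU] := comp_compo hc.
have hev' : forall e, e \in E -> e \subset compo c -> ~~ odd #|e :&: N|.
  by move=> e he hs; move: (hev e he); rewrite hU hs.
have heig := vec_eigen hd hU hev'.
have hcU : c \in P :|: N by rewrite hU compo_self.
have hne : vec P N != 0.
  apply/eqP => h0; have := vec_sq hd hcU; rewrite h0 mxE mulr0 => /eqP.
  by rewrite eq_sym oner_eq0.
have heigvec : lap_eigvec k E 0 (vec P N).
  by split => // i; rewrite heig mul0r.
split; [split => // | split].
- move=> i; rewrite mxE; case: ifP => _; first exact: real1.
  by case: ifP => _; rewrite ?rpredN ?real1 ?real0.
- split.
    move=> i; rewrite mxE; case: ifP => _; first by rewrite normr1.
    by case: ifP => _; rewrite ?normrN ?normr1 ?normr0 ?ler01.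
  exists c; move: hcU; rewrite mxE inE; case: ifP => _; first by rewrite normr1.
  by move=> /= ->; rewrite normrN normr1.
split => // y [hy0 hyeig] hprop.
have hy : forall i, lap_apply k E y i = 0 by move=> i; rewrite hyeig mul0r.
have [i hi] := @exists_max (fun j => `|y ord0 j|) c (fun j => normr_real _).
have [j hj] := nz_exists hy0.
have hri : 0 < `|y ord0 i| by apply: lt_le_trans (hi j); rewrite normr_gt0.
move: hprop; rewrite properE => /andP [hsub]; apply/negP; apply/negPn.
have hiS : i \in supp (vec P N).
  by apply: (subsetP hsub); rewrite inE -normr_gt0.
move: hiS; rewrite supp_vec // hU inE => hci.
apply/subsetP => m; rewrite inE => hcm.
have hcon : connect (adj E) i m.
  by apply: connect_trans hcm; rewrite connect_symE.
have := conn_max hy hi (erefl _) hcon.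
by rewrite inE -normr_gt0 => ->.
Qed.


Lemma neq1m1 : (1 : C) != -1.
Proof.
apply/eqP => h.
have : (1 : C) + 1 = 0 by rewrite {2}h subrr.
by rewrite -mulr2n => /eqP; rewrite pnatr_eq0.
Qed.

Lemma sign_le1 m : (-1) ^+ m <= (1 : C).
Proof.
rewrite -signr_odd; case: (odd m); rewrite ?expr1 ?expr0 //.
exact: le_trans (lerN10 _) ler01.
Qed.

Lemma mc_good x : minimal_canonical_H0 k E x -> exists P N, good (P, N) /\ x = vec P N.
Proof.
case=> [[[hx0 hxeig] hreal] [[hle1 [i0 hi0]] [_ hmin]]].
have hy : forall i, lap_apply k E x i = 0 by move=> i; rewrite hxeig mul0r.
have hmod : forall j, j \in compo i0 -> `|x ord0 j| = 1.
  by move=> j; rewrite inE => hj; apply: conn_max hy hle1 _ _ hi0 hj.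
set z := restr (compo i0) x.
have hz : lap_eigvec k E 0 z.
  split; last by move=> i; rewrite restr_lap // mul0r.
  apply/eqP => h; have : z ord0 i0 = 0 by rewrite h mxE.
  rewrite mxE compo_self => hx; move: hi0; rewrite hx normr0 => /eqP.
  by rewrite eq_sym oner_eq0.
have hzs : supp z \subset supp x.
  by apply/subsetP => m; rewrite !inE mxE; case: ifP => // _; rewrite eqxx.
have hxz : supp x \subset supp z.
  apply: contraT => nb; exfalso; apply: (hmin z hz); by rewrite properE hzs nb.
have hout : forall j, j \notin compo i0 -> x ord0 j = 0.
  move=> j hj; apply/eqP; apply: contraR hj => hj.
  have : j \in supp z by apply: (subsetP hxz); rewrite inE.
  by rewrite inE mxE; case: ifP => // _; rewrite eqxx.
have hpm : forall j, j \in compo i0 -> x ord0 j = 1 \/ x ord0 j = -1.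
  move=> j hj; rewrite (realEsign (hreal j)) hmod // mulr1.
  by case: (x ord0 j < 0); [right; rewrite expr1 | left; rewrite expr0].
set P := [set j in compo i0 | x ord0 j == 1].
set N := [set j in compo i0 | x ord0 j == -1].
have compoE : forall m, (m \in compo i0) = connect (adj E) i0 m.
  by move=> m; rewrite inE.
have hd : [disjoint P & N].
  rewrite -setI_eq0; apply/eqP/setP => m; rewrite !inE.
  case: (eqVneq (x ord0 m) 1) => [->|]; last by rewrite !andbF.
  by rewrite (negbTE neq1m1) !andbF.
have hU : P :|: N = compo i0.
  apply/setP => m; rewrite !inE -compoE.
  case: (boolP (m \in compo i0)) => //= hm.
  by case: (hpm m hm) => ->; rewrite eqxx ?orbT.
have hxv : x = vec P N.
  apply/rowP => m; rewrite mxE !inE -compoE.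
  case: (boolP (m \in compo i0)) => /= hm.
    case: (hpm m hm) => ->; rewrite eqxx //.
    by rewrite eq_sym (negbTE neq1m1).
  exact: hout.
exists P, N; split => //.
apply/and3P; split => //=; first by rewrite hU compo_comp.
apply/forall_inP => e he; apply/implyP; rewrite hU => hsub.
have [j hj] : exists j, j \in e.
  by apply/set0Pn; rewrite -card_gt0 (hEk he); case: k hk2.
have hjc : j \in compo i0 := subsetP hsub j hj.
have heE : e \in edges_at E j by rewrite inE he hj.
have hjU : j \in P :|: N by rewrite hU.
have hsq := vec_sq hd hjU.
have h1 := lap0E (hy j).
rewrite hxv pow_sign // in h1.
have h2 : \sum_(e' in edges_at E j) (-1) ^+ #|e' :&: N| = (deg E j)%:R :> C.
  have -> : (deg E j)%:R = (deg E j)%:R * vec P N ord0 j * vec P N ord0 j :> C.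
    by rewrite -mulrA hsq mulr1.
  rewrite h1 mulr_suml; apply: eq_bigr => e'.
  rewrite inE => /andP [he' hje'].
  have hsubU : e' \subset P :|: N by rewrite hU; exact: compo_edge hjc he' hje'.
  rewrite -(prod_vec hd hsubU) (bigD1 j) //= [LHS]mulrC; congr (_ * _).
  by apply: eq_bigl => m; rewrite !inE andbC.
have h3 : \sum_(e' in edges_at E j) (1 - (-1) ^+ #|e' :&: N|) = 0 :> C.
  by rewrite sumrB h2 sumr_const subrr.
have := psumr_eq0P (fun e' _ => (etrans (subr_ge0 _ _) (sign_le1 _))) h3 heE.
move/eqP; rewrite subr_eq0 -signr_odd; case: (odd _) => //.
by rewrite expr1 (negbTE neq1m1).
Qed.


Lemma compl_set (P N Cc : {set 'I_n}) : [disjoint P & N] -> P :|: N = Cc -> P = Cc :\: N.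
Proof.
move=> hd hU; apply/setP => m; rewrite -hU !inE.
case: (boolP (m \in N)) => hmN /=; last by rewrite orbF.
by rewrite (disjointFl hd hmN).
Qed.

Lemma good_sym P N : good (P, N) -> good (N, P).
Proof.
case/and3P => /= hd hc /forall_inP hev; apply/and3P; split => /=.
- by rewrite disjoint_sym.
- by rewrite setUC.
apply/forall_inP => e he; apply/implyP; rewrite setUC => hsub.
move: (hev e he); rewrite hsub /= => hN.
have hD : e :\: N = e :&: P.
  apply/setP => m; rewrite !inE; case: (boolP (m \in e)) => hm; rewrite ?andbF //=.
  move: (subsetP hsub m hm); rewrite inE => /orP [hmP|hmN].
    by rewrite hmP (disjointFr hd hmP).
  by rewrite hmN (disjointFl hd hmN).
have := cardsID N e; rewrite hD (hEk he) => hk.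
by move: hkeven; rewrite -hk oddD (negbTE hN).
Qed.

Lemma vec_neg (P N : {set 'I_n}) : [disjoint P & N] -> - vec P N = vec N P.
Proof.
move=> hd; apply/rowP => m; rewrite !mxE.
case: (boolP (m \in P)) => hmP.
  by rewrite (disjointFr hd hmP).
by case: (boolP (m \in N)) => hmN; rewrite ?opprK ?oppr0.
Qed.

Lemma vec_memP (P N : {set 'I_n}) m : [disjoint P & N] ->
  (m \in P) = (vec P N ord0 m == 1) /\ (m \in N) = (vec P N ord0 m == -1).
Proof.
move=> hd; rewrite mxE; case: (boolP (m \in P)) => hmP.
  by rewrite (disjointFr hd hmP) eqxx (negbTE neq1m1).
case: (boolP (m \in N)) => hmN; first by rewrite eqxx eq_sym (negbTE neq1m1).
by rewrite eq_sym oner_eq0 eq_sym oppr_eq0 oner_eq0.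
Qed.

Lemma vec_inj (P N P' N' : {set 'I_n}) : [disjoint P & N] -> [disjoint P' & N'] ->
  vec P N = vec P' N' -> P = P' /\ N = N'.
Proof.
move=> hd hd' h; split; apply/setP => m.
  by rewrite (vec_memP m hd).1 (vec_memP m hd').1 h.
by rewrite (vec_memP m hd).2 (vec_memP m hd').2 h.
Qed.

Definition rep (p : {set 'I_n} * {set 'I_n}) : bool :=
  good p && [exists i in p.1, [forall j in p.2, (i < j)%N]].

Lemma rep_anti P N : rep (P, N) -> rep (N, P) -> False.
Proof.
case/andP => _ /exists_inP [i hi /forall_inP hiN].
case/andP => _ /exists_inP [i' hi' /forall_inP hi'P].
have h1 := hiN i' hi'; have h2 := hi'P i hi.
by have := ltn_trans h1 h2; rewrite ltnn.
Qed.

Lemma good_disj p : good p -> [disjoint p.1 & p.2].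
Proof. by case/and3P. Qed.

Lemma good_comp p : good p -> exists c, p.1 :|: p.2 = compo c.
Proof. by case/and3P => _ /comp_compo. Qed.

Lemma min_in (Cc : {set 'I_n}) c : c \in Cc ->
  exists2 m, m \in Cc & forall j, j \in Cc -> (m <= j)%N.
Proof.
move=> hc; case: (arg_minnP (fun i : 'I_n => val i) hc) => m hm hmin.
by exists m.
Qed.

Lemma rep_of_min P N m : good (P, N) -> m \in P ->
  (forall j, j \in P :|: N -> (m <= j)%N) -> rep (P, N).
Proof.
move=> hg hm hmin; apply/andP; split => //; apply/exists_inP; exists m => //.
apply/forall_inP => j hj; rewrite ltn_neqAle hmin ?inE ?hj ?orbT // andbT.
apply/negP => /eqP /val_inj ejm; move: hj; rewrite -ejm.
by rewrite (disjointFr (good_disj hg) hm).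
Qed.

Lemma rep_or P N : good (P, N) -> rep (P, N) \/ rep (N, P).
Proof.
move=> hg; have [c hc] := good_comp hg.
have hcU : c \in P :|: N by rewrite /= in hc; rewrite hc compo_self.
have [m hm hmin] := min_in hcU.
move: hm; rewrite inE => /orP [hmP|hmN].
  by left; apply: rep_of_min hg hmP hmin.
right; apply: rep_of_min (good_sym hg) hmN _ => j hj; apply: hmin.
by rewrite setUC.
Qed.


Lemma count_comp c :
  #|[set p | rep p & p.1 :|: p.2 == compo c]| =
  (if #|compo c| == 1%N then 1 else #|even_bip_partitions E (compo c)| + 1)%N.
Proof.
set Cc := compo c.
set S := [set p | rep p & p.1 :|: p.2 == Cc].
set T := [set p in S | p.2 != set0].
have hgood0 : good (Cc, set0).
  apply/and3P; split => /=; first by rewrite -setI_eq0 setI0.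
    by rewrite setU0 compo_comp.
  apply/forall_inP => e _; rewrite setI0 cards0; exact: implybT.
have hrep0 : rep (Cc, set0).
  rewrite /rep hgood0 /=; apply/exists_inP; exists c; first exact: compo_self.
  by apply/forall_inP => j; rewrite inE.
have hS : S = (Cc, set0) |: T.
  apply/setP => -[P N]; rewrite in_setU1 !inE /= xpair_eqE.
  case: (eqVneq N set0) => [->|hN] /=; rewrite ?setU0 ?andbT ?andbF ?orbF //.
  by case: (eqVneq P Cc) => [->|]; rewrite ?hrep0 ?andbF.
have h0T : (Cc, set0) \notin T by rewrite !inE /= eqxx andbF.
rewrite hS cardsU1 h0T /= add1n.
case: ifP => h1.
  suff -> : #|T| = 0%N by [].
  apply/eqP; rewrite cards_eq0; apply/eqP/setP => -[P N]; rewrite !inE /=.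
  apply/negbTE/negP => /andP [/andP [hr /eqP hU] hN].
  case/andP: (hr) => /good_disj /= hd /exists_inP [i hi _].
  have hP : (0 < #|P|)%N by rewrite card_gt0; apply/set0Pn; exists i.
  have hN' : (0 < #|N|)%N by rewrite card_gt0.
  have := cardsUI P N; rewrite hU (eqP h1).
  move: hd; rewrite -setI_eq0 => /eqP ->; rewrite cards0.
  move: hP hN'; clear; lia.
pose f2 (p : {set 'I_n} * {set 'I_n}) := [set p.2; p.1].
have hinj : {in T &, injective f2}.
  move=> [P N] [P' N']; rewrite !inE /= => /andP [/andP [hr /eqP hU] _].
  move=> /andP [/andP [hr' /eqP hU'] _] e.
  have hd := good_disj (andP hr).1; have hd' := good_disj (andP hr').1.
  rewrite /= in hd hd'.
  have hP := compl_set hd hU; have hP' := compl_set hd' hU'.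
  have hN' : N' = Cc :\: P'.
    apply: compl_set; first by rewrite disjoint_sym. by rewrite setUC.
  have : N \in f2 (P', N') by rewrite -e /f2 /= !inE eqxx.
  rewrite /f2 /= !inE => /orP [/eqP eN|/eqP eN].
    by rewrite hP hP' eN.
  exfalso; have eP : P = N' by rewrite hP hN' eN.
  by apply: (rep_anti hr); rewrite eN eP.
have him : [set f2 p | p in T] = even_bip_partitions E Cc.
  apply/setP => Q; apply/imsetP/idP.
    move=> [[P N]]; rewrite !inE /= => /andP [/andP [hr /eqP hU] hN] ->.
    case/andP: (hr) => hg /exists_inP [i hi _].
    case/and3P: (hg) => /= hd _ /forall_inP hev.
    apply/existsP; exists N; apply/existsP; exists P.
    apply/andP; split => //; apply/and5P; split => //.
    - by apply/set0Pn; exists i.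
    - by rewrite disjoint_sym.
    - by rewrite setUC hU.
    - by apply/forall_inP => e he; move: (hev e he); rewrite hU.
  rewrite inE => /existsP [S0 /existsP [T0 /andP [/eqP hQ /and5P [hS0 hT0 hd /eqP hU hev]]]].
  have hg : good (T0, S0).
    apply/and3P; split => /=; first by rewrite disjoint_sym.
      by rewrite setUC hU compo_comp.
    by rewrite setUC hU.
  have [m hm hmin] := min_in (compo_self c : c \in Cc).
  move: hm; rewrite -hU inE => /orP [hmS|hmT].
    have hr : rep (S0, T0).
      by apply: rep_of_min (good_sym hg) hmS _ => j hj; apply: hmin; rewrite -hU.
    exists (S0, T0); first by rewrite !inE /= hr hU eqxx.
    by rewrite hQ /f2 /= setUC.
  have hr : rep (T0, S0).
    by apply: rep_of_min hg hmT _ => j hj; apply: hmin; rewrite -hU setUC.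
  exists (T0, S0); first by rewrite !inE /= hr setUC hU eqxx.
  by rewrite hQ.
by rewrite -(card_in_imset hinj) him addnC.
Qed.


Lemma deg0_compo i : deg E i = 0%N -> compo i = [set i].
Proof.
move=> h0; apply/setP => j; rewrite !inE; apply/idP/eqP => [|->]; last exact: connect0.
case/connectP => [[|a p]] //= /andP [/existsP [e /andP [he /andP [hie _]]] _] _.
have : (0 < deg E i)%N.
  by rewrite card_gt0; apply/set0Pn; exists e; rewrite inE he hie.
by rewrite h0.
Qed.

Lemma compo1_deg i : #|compo i| == 1%N -> deg E i = 0%N.
Proof.
case/cards1P => x hx; apply/eqP; apply: contraT; rewrite -lt0n card_gt0 => /set0Pn [e].
rewrite inE => /andP [he hie].
have [m] := edge_other he hie; rewrite !inE => /andP [hmi hme].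
have hm : m \in compo i := subsetP (compo_edge (compo_self i) he hie) m hme.
have hi := compo_self i.
move: hm hi; rewrite hx !inE => /eqP em /eqP ei.
by move: hmi; rewrite em ei eqxx.
Qed.

Lemma sing_count : #|[set Cc in components E | #|Cc| == 1%N]| = num_singletons E.
Proof.
rewrite /num_singletons.
have -> : [set Cc in components E | #|Cc| == 1%N] = [set [set i] | i in [set i | deg E i == 0%N]].
  apply/setP => Cc; rewrite inE; apply/andP/imsetP.
    move=> [hc h1]; have [c ec] := comp_compo hc; rewrite ec in h1.
    have hd := compo1_deg h1; exists c; first by rewrite inE hd.
    by rewrite ec deg0_compo.
  move=> [i]; rewrite inE => /eqP hd ->; rewrite -deg0_compo // compo_comp.
  by rewrite deg0_compo // cards1.
by rewrite card_in_imset //; move=> i j _ _; apply: set1_inj.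
Qed.

Lemma total : #|[set p | rep p]| =
  (num_even_bip_components E + num_components E - num_singletons E)%N.
Proof.
have hA : #|[set p | rep p]| =
    (\sum_(Cc in components E) #|[set p | rep p & p.1 :|: p.2 == Cc]|)%N.
  rewrite [LHS]cardE -sum1_size big_enum /=.
  rewrite (partition_big (fun p => p.1 :|: p.2) (fun Cc => Cc \in components E)).
    apply: eq_bigr => Cc _; rewrite -sum1_card; apply: eq_bigl => p; by rewrite !inE.
  by move=> p; rewrite inE => /andP [/and3P []].
have hB : forall Cc, Cc \in components E ->
    #|[set p | rep p & p.1 :|: p.2 == Cc]| =
    (if #|Cc| == 1%N then 1 else #|even_bip_partitions E Cc| + 1)%N.
  by move=> Cc /comp_compo [c ->]; apply: count_comp.
rewrite hA (eq_bigr _ hB).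
have e1 : (\sum_(Cc in components E)
      (if #|Cc| == 1%N then 1 else #|even_bip_partitions E Cc| + 1))%N =
    (num_even_bip_components E + \sum_(Cc in components E) (#|Cc| != 1%N))%N.
  rewrite /num_even_bip_components -big_split; apply: eq_bigr => Cc _.
  by rewrite /even_bip_contrib; case: ifP => //= _; rewrite addn1.
have e2 : num_components E = (\sum_(Cc in components E) (#|Cc| == 1%N) +
    \sum_(Cc in components E) (#|Cc| != 1%N))%N.
  rewrite -big_split /num_components -sum1_card; apply: eq_bigr => Cc _.
  by case: (_ == _).
have e3 : (\sum_(Cc in components E) (#|Cc| == 1%N))%N = num_singletons E.
  rewrite -sing_count -sum1_card big_mkcond [RHS]big_mkcond /=; apply: eq_bigr => Cc _.
  by rewrite inE; case: (Cc \in components E); case: (_ == _).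
rewrite e1 e2 e3; lia.
Qed.

Lemma main_sec : exists s : seq 'rV[C]_n,
    [/\ uniq s,
        (forall x, x \in s -> - x \notin s),
        (forall x, minimal_canonical_H0 k E x <-> (x \in s \/ - x \in s)) &
        size s = (num_even_bip_components E + num_components E - num_singletons E)%N].
Proof.
exists [seq vec p.1 p.2 | p <- enum [set p | rep p]]; split.
- rewrite map_inj_in_uniq ?enum_uniq //.
  move=> [P N] [P' N']; rewrite !mem_enum !inE => hp hq /= e.
  have hd := good_disj (andP hp).1; have hd' := good_disj (andP hq).1.
  have [eP eN] := vec_inj hd hd' e; rewrite /= in eP eN; by rewrite eP eN.
- move=> x /mapP [[P N] hp ->]; apply/negP => /mapP [[P' N'] hq] /= e.
  rewrite mem_enum inE in hp; rewrite mem_enum inE in hq.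
  have hd := good_disj (andP hp).1; have hd' := good_disj (andP hq).1.
  rewrite vec_neg // in e.
  have hd2 : [disjoint N & P] by rewrite disjoint_sym.
  have [eN eP] := vec_inj hd2 hd' e.
  by apply: (rep_anti hp); rewrite eN eP.
- move=> x; split.
    move/mc_good => [P [N [hg ->]]].
    have hd := good_disj hg.
    case: (rep_or hg) => hr; [left | right].
      by apply/mapP; exists (P, N); rewrite ?mem_enum ?inE.
    by rewrite vec_neg //; apply/mapP; exists (N, P); rewrite ?mem_enum ?inE.
  case => /mapP [[P N] hp] /= e; rewrite mem_enum inE in hp.
    by rewrite e; apply: vec_good (andP hp).1.
  have hd := good_disj (andP hp).1.
  have -> : x = vec N P by rewrite -vec_neg // -e opprK.
  exact: vec_good (good_sym (andP hp).1).
- by rewrite size_map -cardE total.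
Qed.

End Proof5.

Theorem proposition5p2 (C : numClosedFieldType) (n k : nat) (E : {set {set 'I_n}}) :
  ~~ odd k -> (4 <= k)%N -> is_uniform_hypergraph k E ->
  exists s : seq 'rV[C]_n,
    [/\ uniq s,
        (forall x, x \in s -> - x \notin s),
        (forall x, minimal_canonical_H0 k E x <-> (x \in s \/ - x \in s)) &
        size s = (num_even_bip_components E + num_components E - num_singletons E)%N].
Proof.
move=> hke hk4 [_ [_ hEk]].
apply: main_sec => //.
by apply: leq_trans hk4.
Qed.
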